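(* Let $\omega\in\Omega$, $x,y\in X$, $z\in\mathbb C\setminus\sigma_\omega$ and $r\ge0$. Then $$G_{\omega,r}(x,y;z)=G_{\omega,0}(x,y;z)-\sum_{s=\max(1,d(x,y))}^{r}p_sN_{s-1}\,g_{\omega,s-1}(x;z)\,g_{\omega,s}(y;z),$$ where an empty sum is zero.
   Context: $(X,\mathbf P,\mathbf n)$ is a hierarchical structure: $X$ infinite countable, $\mathbf n=(n_r)_{r\ge0}$ positive integers, $\mathcal P_r$ partitions of $X$ (''clusters of rank $r$'') with $n_0=1$ and rank-0 clusters singletons, every rank-$r$ cluster ($r\ge1$) a disjoint union of exactly $n_r$ rank-$(r-1)$ clusters, and any two points in a common cluster of some rank. $N_r=\prod_{s=0}^rn_s$, $Q_r(x)$ is the rank-$r$ cluster containing $x$, $d(x,y)=\min\{r:y\in Q_r(x)\}$, $(E_r\psi)(x)=\frac1{N_r}\sum_{d(x,y)\le r}\psi(y)$; $(p_r)_{r\ge1}$ positive with $\sum p_r=1$, $p_0=0$. For $\omega\in\mathbb R^X$, $V_\omega$ is multiplication by $\omega(x)$, and $H_{\omega,r}=V_\omega+\sum_{s=0}^rp_sE_s$ (so $H_{\omega,0}=V_\omega$). For each rank-$r$ cluster $Q$, $\ell^2(Q)=\{\psi:\psi=0\text{ off }Q\}$ is invariant under $H_{\omega,r}$; let $\sigma(\omega,Q)$ be the (finite) set of eigenvalues of $H_{\omega,r}$ restricted to $\ell^2(Q)$, and $\sigma_\omega=\bigcup\sigma(\omega,Q)$ over all clusters $Q$ of all ranks $r$.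 For $z\notin\sigma_\omega$, $G_{\omega,r}(x,y;z)=\langle\delta_x,(H_{\omega,r}\!\upharpoonright_{\ell^2(Q_r(x))}-z)^{-1}\delta_y\rangle$ if $d(x,y)\le r$ and $0$ otherwise (this is the matrix element $\langle\delta_x,(H_{\omega,r}-z)^{-1}\delta_y\rangle$), and $g_{\omega,r}(t;z)=\frac1{N_r}\sum_{d(t',t)\le r}G_{\omega,r}(t',t;z)$. *)

(* Defs.v *)
From mathcomp Require Import all_boot all_algebra.
From mathcomp Require Import all_classical all_reals all_analysis.
From mathcomp.real_closed Require Import complex.
Import GRing.Theory Num.Theory numFieldNormedType.Exports.

Set Implicit Arguments.
Unset Strict Implicit.
Unset Printing Implicit Defensive.

Local Open Scope ring_scope.

(* The partition P_r is encoded by a function [Q r] sending x to the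
   rank-r cluster Q_r(x) containing x, given as a canonical duplicate-free
   enumeration (the same list for all points of the cluster). *)
Record hier (X : countType) := Hier {
  nn : nat -> nat;
  Q : nat -> X -> seq X;
  X_infinite : forall s : seq X, exists x, x \notin s;
  nn_pos : forall r, (0 < nn r)%N;
  nn0 : nn 0 = 1%N;
  Q_uniq : forall r x, uniq (Q r x);
  Q_self : forall r x, x \in Q r x;
  Q_canon : forall r x y, y \in Q r x -> Q r y = Q r x;
  Q0 : forall x, Q 0 x = [:: x];
  Q_nest : forall r x y, y \in Q r.+1 x -> {subset Q r y <= Q r.+1 x};
  Q_count : forall r x, size (undup [seq Q r y | y <- Q r.+1 x]) = nn r.+1;
  Q_conn : forall x y, exists r, y \in Q r x
}.

Section Defs.
Variables (X : countType) (H : hier X).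

Definition NN (r : nat) : nat := \prod_(s < r.+1) nn H s.

Definition dist (x y : X) : nat :=
  ex_minn (P := fun r => y \in Q H r x) (Q_conn H x y).

Variables (R : realType) (p : nat -> R) (om : X -> R).

(* Matrix of H_{om,r} restricted to l^2(Q_r(x)), in the basis of delta
   functions of the points of Q_r(x) (in the order of the enumeration):
   entry (u,v) = om(u) [u = v] + sum_{s=0}^r p_s [d(u,v) <= s] / N_s. *)
Definition Hmat (r : nat) (x : X) : 'M[R[i]]_(size (Q H r x)) :=
  \matrix_(i, j)
    (let u := nth x (Q H r x) i in
     let v := nth x (Q H r x) j in
     ((om u * (i == j)%:R
       + \sum_(s < r.+1) p s / (NN s)%:R * (dist u v <= s)%:R)%:C)%C).

Definition in_sigma (z : R[i]) : Prop :=
  exists r x, eigenvalue (Hmat r x) z.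

Definition mx_at (k : nat) (A : 'M[R[i]]_k) (i j : nat) : R[i] :=
  match @insub nat (fun m => (m < k)%N) 'I_k i,
        @insub nat (fun m => (m < k)%N) 'I_k j with
  | Some i', Some j' => A i' j'
  | _, _ => 0
  end.

Definition Green (r : nat) (x y : X) (z : R[i]) : R[i] :=
  if (dist x y <= r)%N then
    mx_at (invmx (Hmat r x - z%:M)) (index x (Q H r x)) (index y (Q H r x))
  else 0.

Definition gfun (r : nat) (t : X) (z : R[i]) : R[i] :=
  ((NN r)%:R)^-1 * \sum_(t' <- Q H r t) Green r t' t z.

End Defs.

(* Main.v *)
Require Import Defs.
From mathcomp Require Import all_boot all_algebra.
From mathcomp Require Import all_classical all_reals all_analysis.
From mathcomp.real_closed Require Import complex.
From mathcomp Require Import ring.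
Import GRing.Theory Num.Theory numFieldNormedType.Exports.
Local Open Scope classical_set_scope.
Local Open Scope ring_scope.

Set Implicit Arguments.
Unset Strict Implicit.

Section Proof5.
Variables (X : countType) (H : hier X).

Lemma Qsub r x : {subset Q H r x <= Q H r.+1 x}.
Proof. exact: (Q_nest (Q_self H r.+1 x)). Qed.

Lemma Qmono r s x : (r <= s)%N -> {subset Q H r x <= Q H s x}.
Proof.
elim: s => [|s IH]; first by rewrite leqn0 => /eqP ->.
rewrite leq_eqVlt => /orP [/eqP -> //|]; rewrite ltnS => /IH h w /h.
exact: Qsub.
Qed.

Lemma memQ_sym r x y : y \in Q H r x -> x \in Q H r y.
Proof. by move=> hy; rewrite (Q_canon hy) Q_self. Qed.

Lemma distP r x y : (dist H x y <= r)%N = (y \in Q H r x).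
Proof.
rewrite /dist; case: ex_minnP => m Pm minm; apply/idP/idP => h.
  exact: Qmono h _ Pm.
exact: minm.
Qed.

Lemma dist_sym x y : dist H x y = dist H y x.
Proof.
by apply/anti_leq; rewrite !distP; apply/andP; split; apply: memQ_sym;
  rewrite -distP.
Qed.

Lemma restrict_sum (R : nmodType) (s t : seq X) (f : X -> R) :
  uniq s -> uniq t -> {subset t <= s} -> (forall w, w \notin t -> f w = 0) ->
  \sum_(w <- s) f w = \sum_(w <- t) f w.
Proof.
move=> us ut sts f0; rewrite (bigID (mem t)) /= [X in _ + X]big1 ?addr0;
  last by move=> w /f0.
rewrite -big_filter; apply: perm_big; apply: uniq_perm.
- exact: filter_uniq.
- exact: ut.
by move=> w; rewrite mem_filter; case wt: (w \in t) => //=; apply: sts.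
Qed.

Variables (R : realType) (p : nat -> R) (om : X -> R) (z : R[i]).

Definition h r (w v : X) : R[i] :=
  ((om w * (w == v)%:R
       + \sum_(s < r.+1) p s / (NN H s)%:R * (dist H w v <= s)%:R)%:C)%C
  - z * (w == v)%:R.

Lemma h_sym r w v : h r w v = h r v w.
Proof. have [->|ne] := eqVneq w v; first done.
by rewrite /h (negbTE ne) eq_sym (negbTE ne) dist_sym !mulr0. Qed.

Lemma mx_at_ord k (A : 'M[R[i]]_k) (i j : 'I_k) : mx_at A i j = A i j.
Proof. by rewrite /mx_at !valK. Qed.

Lemma Hmat_entry r x (i j : 'I_(size (Q H r x))) :
  (Hmat H p om r x - z%:M) i j =
  h r (nth x (Q H r x) i) (nth x (Q H r x) j).
Proof.
rewrite !mxE /h nth_uniq ?Q_uniq //.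
by rewrite [z * _]mulr_natr.
Qed.

Lemma Green_in r x u w : u \in Q H r x -> w \in Q H r x ->
  Green H p om r u w z =
  mx_at (invmx (Hmat H p om r x - z%:M)) (index u (Q H r x)) (index w (Q H r x)).
Proof.
move=> hu hw.
have hw' : w \in Q H r u by rewrite (Q_canon hu).
rewrite /Green distP hw' /Hmat (Q_canon hu).
congr (mx_at (invmx (_ - _)) _ _); apply/matrixP => i j; rewrite !mxE.
by rewrite !(set_nth_default x u).
Qed.

Lemma Green_out r u w : w \notin Q H r u -> Green H p om r u w z = 0.
Proof. by move=> hw; rewrite /Green distP (negbTE hw). Qed.

Lemma sum_Q r x (F : X -> R[i]) :
  \sum_(w <- Q H r x) F w = \sum_(i < size (Q H r x)) F (nth x (Q H r x) i).
Proof. by rewrite (big_nth x) big_mkord. Qed.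

Hypothesis hz : ~ in_sigma H p om z.

Lemma unitA r x : Hmat H p om r x - z%:M \in unitmx.
Proof.
rewrite -row_free_unit -kermx_eq0; apply/negPn/negP => hk.
by apply: hz; exists r, x.
Qed.

Lemma L1 r x u v : u \in Q H r x -> v \in Q H r x ->
  \sum_(w <- Q H r x) Green H p om r u w z * h r w v = (u == v)%:R.
Proof.
move=> hu hv; set C := Q H r x.
have uC : uniq C by apply: Q_uniq.
pose ou : 'I_(size C) := Ordinal (etrans (index_mem u C) hu).
pose ov : 'I_(size C) := Ordinal (etrans (index_mem v C) hv).
have := congr1 (fun M : matrix R[i] (size C) (size C) => M ou ov) (mulVmx (unitA r x)).
rewrite !mxE /= => E.
have -> : (u == v) = (ou == ov).
  apply/eqP/eqP => [e|/(congr1 val) /= e]; first by apply: val_inj => /=; rewrite e.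
  by rewrite -(nth_index x hu) e nth_index.
rewrite -E sum_Q; apply: eq_bigr => i _.
rewrite (Green_in hu) ?mem_nth // index_uniq //.
rewrite -[index u C]/(val ou) mx_at_ord; congr (_ * _).
by rewrite Hmat_entry /= nth_index.
Qed.

Lemma Gsym r u w : Green H p om r u w z = Green H p om r w u z.
Proof.
case: (boolP (w \in Q H r u)) => hw; last first.
  rewrite !Green_out //; apply: contra hw; exact: memQ_sym.
have hu := Q_self H r u.
rewrite (Green_in hu hw) (Green_in hw hu).
have uC := Q_uniq H r u.
pose ou : 'I_(size (Q H r u)) := Ordinal (etrans (index_mem u _) hu).
pose ow : 'I_(size (Q H r u)) := Ordinal (etrans (index_mem w _) hw).
rewrite -[index u _]/(val ou) -[index w _]/(val ow) !mx_at_ord.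
have eT : (invmx (Hmat H p om r u - z%:M))^T =
          invmx (Hmat H p om r u - z%:M).
  rewrite trmx_inv; congr invmx; apply/matrixP => i j.
  by rewrite [in LHS]mxE !Hmat_entry h_sym.
by rewrite -[in RHS]eT mxE.
Qed.

Lemma L1r r x w y : w \in Q H r x -> y \in Q H r x ->
  \sum_(v <- Q H r x) h r w v * Green H p om r v y z = (w == y)%:R.
Proof.
move=> hw hy; rewrite eq_sym -(L1 hy hw); apply: eq_bigr => v _.
by rewrite mulrC Gsym h_sym.
Qed.

Lemma L3 r x u v : u \in Q H r.+1 x -> v \in Q H r.+1 x ->
  \sum_(w <- Q H r.+1 x) Green H p om r u w z * h r w v = (u == v)%:R.
Proof.
move=> hu hv.
rewrite (@restrict_sum _ _ (Q H r u)) ?Q_uniq //; first last.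
- by move=> w hw; rewrite Green_out ?mul0r.
- by apply: Q_nest.
case: (boolP (v \in Q H r u)) => hvu; first by apply: L1 => //; apply: Q_self.
have -> : (u == v) = false.
  by apply/negbTE; apply: contra hvu => /eqP <-; apply: Q_self.
rewrite big_seq big1 // => w hw; rewrite /h.
have -> : (w == v) = false.
  by apply/negbTE; apply: contra hvu => /eqP <-.
rewrite big1 ?mulr0 ?addr0 ?subr0 ?rmorph0 ?mulr0 //=.
move=> s _; case: (leqP (dist H w v) s) => hs; last by rewrite mulr0.
exfalso; move: hvu; rewrite -(Q_canon hw) -distP.
by rewrite (leq_trans hs) // -ltnS.
Qed.

Lemma h_succ r w v : (dist H w v <= r.+1)%N ->
  h r.+1 w v = h r w v + (p r.+1)%:C%C / (NN H r.+1)%:R.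
Proof.
move=> hd; rewrite /h big_ord_recr /= hd mulr1 addrA rmorphD /=.
by rewrite fmorph_div /= rmorph_nat addrAC.
Qed.

Lemma NN_neq0 r : (NN H r)%:R != 0 :> R[i].
Proof.
rewrite pnatr_eq0 -lt0n /NN prodn_gt0 // => i; exact: nn_pos.
Qed.

Lemma sum_delta (s : seq X) a (f : X -> R[i]) : uniq s -> a \in s ->
  \sum_(w <- s) (a == w)%:R * f w = f a.
Proof.
move=> us ha; rewrite (@restrict_sum _ _ [:: a]) //; last first.
- by move=> w; rewrite inE eq_sym => /negbTE ->; rewrite mul0r.
- by move=> w; rewrite inE => /eqP ->.
by rewrite big_seq1 eqxx mul1r.
Qed.

Lemma step r x y : y \in Q H r.+1 x ->
  Green H p om r x y z = Green H p om r.+1 x y z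
    + (p r.+1)%:C%C * (NN H r)%:R * gfun H p om r x z * gfun H p om r.+1 y z.
Proof.
move=> hy; set C := Q H r.+1 x.
have hx : x \in C by apply: Q_self.
have uC : uniq C by apply: Q_uniq.
set c := (p r.+1)%:C%C / (NN H r.+1)%:R.
set S1 := \sum_(w <- C) Green H p om r x w z.
set S2 := \sum_(v <- C) Green H p om r.+1 v y z.
have E1 : Green H p om r x y z =
    \sum_(w <- C) Green H p om r x w z * (w == y)%:R.
  rewrite -(sum_delta (fun w => Green H p om r x w z) uC hy).
  by apply: eq_bigr => w _; rewrite mulrC eq_sym.
have E2 : Green H p om r x y z =
    \sum_(v <- C) (\sum_(w <- C) Green H p om r x w z * h r.+1 w v)
       * Green H p om r.+1 v y z.
  rewrite E1 (eq_big_seq (fun w => Green H p om r x w z *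
       \sum_(v <- C) h r.+1 w v * Green H p om r.+1 v y z)); last first.
    by move=> w hw; rewrite L1r.
  under eq_bigr => w _ do rewrite mulr_sumr.
  rewrite exchange_big /=; apply: eq_bigr => v _; rewrite mulr_suml.
  by apply: eq_bigr => w _; rewrite mulrA.
have E3 : forall v, v \in C ->
    \sum_(w <- C) Green H p om r x w z * h r.+1 w v = (x == v)%:R + c * S1.
  move=> v hv.
  rewrite (eq_big_seq (fun w => Green H p om r x w z * h r w v +
        c * Green H p om r x w z)); last first.
    move=> w hw; rewrite h_succ; last by rewrite distP (Q_canon hw).
    by rewrite mulrDr [X in _ + X = _]mulrC.
  by rewrite big_split /= L3 // mulr_sumr.
rewrite E2 (eq_big_seq (fun v => (x == v)%:R * Green H p om r.+1 v y z +
     c * S1 * Green H p om r.+1 v y z)); last first.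
  by move=> v hv; rewrite E3 // mulrDl.
rewrite big_split /= sum_delta // -mulr_sumr -/S2.
have eS2 : S2 = (NN H r.+1)%:R * gfun H p om r.+1 y z.
  by rewrite /gfun mulrA divff ?NN_neq0 // mul1r /S2 (Q_canon hy).
have eS1 : S1 = (NN H r)%:R * gfun H p om r x z.
  rewrite /gfun mulrA divff ?NN_neq0 // mul1r /S1.
  rewrite (@restrict_sum _ _ (Q H r x)) ?Q_uniq //; last first.
  - by move=> w hw; rewrite Green_out.
  - by apply: Q_nest.
  by apply: eq_bigr => w _; rewrite Gsym.
rewrite eS1 eS2 /c; congr (_ + _).
have := NN_neq0 r.+1; move: (NN H r.+1)%:R => N hN.
by field.
Qed.

End Proof5.

Unset Implicit Arguments.
Set Strict Implicit.

Theorem proposition5 (X : countType) (H : hier X) (R : realType)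
  (p : nat -> R) (hp0 : p 0%N = 0) (hpos : forall r, (0 < r)%N -> 0 < p r)
  (hsum : series p @ \oo --> (1 : R))
  (om : X -> R) (x y : X) (z : R[i]) (hz : ~ in_sigma H p om z) (r : nat) :
  Green H p om r x y z =
    Green H p om 0 x y z
    - \sum_(maxn 1 (dist H x y) <= s < r.+1)
        ((p s)%:C)%C * (NN H s.-1)%:R * gfun H p om s.-1 x z * gfun H p om s y z.
Proof.
elim: r => [|r IH]; first by rewrite big_geq ?subr0 // leq_maxl.
case: (leqP (dist H x y) r.+1) => hd.
  rewrite big_nat_recr /=; last by rewrite geq_max hd.
  have hy : y \in Q H r.+1 x by rewrite -distP.
  by rewrite opprD addrA -IH (step hz hy) addrK.
have far : forall s, (s < dist H x y)%N -> Green H p om s x y z = 0.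
  by move=> s hs; rewrite /Green leqNgt hs.
rewrite !far ?(leq_ltn_trans _ hd) // big_geq ?subr0 //.
by rewrite (leq_trans hd) // leq_maxr.
Qed.
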